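(* Let $(Z,Z_{ac},e)$ be an accretive archimedean matrix-order unit space and let $((V,V_{ac}),\psi)$ be a $*$-closure of $(Z,Z_{ac})$. Then $f=\psi(e)$ is an accretive archimedean matrix-order unit for $(V,V_{ac})$.
   Context: For a complex vector space $Z$, $M_n(Z)$ is the $n\times n$ matrices over $Z$; $e\otimes I_n$ is the diagonal matrix with all diagonal entries $e$. A cone is a set $C$ with $C+C\subseteq C$, $tC\subseteq C$ ($t\ge0$); a matrix cone is a sequence of cones $C_n\subseteq M_n(Z)$ with $X^*C_nX\subseteq C_k$ for all scalar $X\in M_{n,k}$; it is $\mathbb{C}$-proper if $C_1\cap-C_1\cap iC_1\cap-iC_1=\{0\}$, and then $(Z,Z_{ac})$ is an accretive matrix-ordered vector space, with $Z_{sa}^n=iZ_{ac}^n\cap-iZ_{ac}^n$. An element $e\in Z_{sa}^1$ is an accretive matrix-order unit if for each $n$ and $z\in M_n(Z)$ there is $t>0$ with $te\otimes I_n+z\in Z_{ac}^n$; it is archimedean if $te\otimes I_n+z\in Z_{ac}^n$ for all $t>0$ implies $z\in Z_{ac}^n$; $(Z,Z_{ac},e)$ is then an accretive archimedean matrix-order unit space. $(V,V_{ac})$ is self-adjoint if $V=\operatorname{span}_{\mathbb{C}}V_{sa}^1$; then $M_n(V)$ carries a unique conjugate-linear involution fixing $V_{sa}^n$, given by $[v_{kl}]^*=[v_{lk}^*]$. A linear map is real-completely positive if its entrywise amplifications preserve the accretive cones; a real-complete order embedding if it is injective and it and its inverse on the range are real-completely positive. A $*$-closure of $(Z,Z_{ac})$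 is a pair $((V,V_{ac}),\psi)$ with $(V,V_{ac})$ a self-adjoint accretive matrix-ordered vector space, $\psi:Z\to V$ a real-complete order embedding, and $V=\psi(Z)+\psi(Z)^*$. *)

(* Defs.v *)
(* Complex scalars: an arbitrary numClosedFieldType C. *)
From HB Require Import structures.
From mathcomp Require Import all_boot all_order all_algebra.
Set Implicit Arguments. Unset Strict Implicit. Unset Printing Implicit Defensive.
Import Order.TTheory GRing.Theory Num.Theory.
Local Open Scope ring_scope.

Section Defs.
Variable C : numClosedFieldType.

Definition mxscale (Z : lmodType C) m n (t : C) (x : 'M[Z]_(m, n)) : 'M[Z]_(m, n) :=
  map_mx (fun v => t *: v) x.

(* X^* z X for a scalar matrix X in M_{n,k}(C) and z in M_n(Z) *)
Definition mxconj_act (Z : lmodType C) n k (X : 'M[C]_(n, k)) (z : 'M[Z]_n)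
  : 'M[Z]_k :=
  \matrix_(i, j) \sum_(p < n) \sum_(q < n) (((X p i)^* * X q j) *: z p q).

Definition eI (Z : lmodType C) n (e : Z) : 'M[Z]_n :=
  \matrix_(i, j) (if i == j then e else 0).

(* a sequence of cones C_n in M_n(Z), n >= 1 (values at n = 0 are ignored) *)
Definition matrix_cone (Z : lmodType C) (K : forall n, 'M[Z]_n -> Prop) : Prop :=
  [/\ (forall n, (0 < n)%N -> forall x y, K n x -> K n y -> K n (x + y)),
      (forall n, (0 < n)%N -> forall (t : C) x, 0 <= t -> K n x -> K n (mxscale t x))
    & (forall n k, (0 < n)%N -> (0 < k)%N -> forall (X : 'M[C]_(n, k)) x,
          K n x -> K k (mxconj_act X x))].

(* C_1 ∩ -C_1 ∩ iC_1 ∩ -iC_1 = {0}, identifying Z with M_1(Z) *)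
Definition C_proper (Z : lmodType C) (K : forall n, 'M[Z]_n -> Prop) : Prop :=
  forall z : Z,
    K 1%N (const_mx z) -> K 1%N (const_mx (- z)) ->
    K 1%N (const_mx (- 'i *: z)) -> K 1%N (const_mx ('i *: z)) -> z = 0.

Definition accretive_movs (Z : lmodType C) (K : forall n, 'M[Z]_n -> Prop) : Prop :=
  matrix_cone K /\ C_proper K.

Definition is_sa (Z : lmodType C) (K : forall n, 'M[Z]_n -> Prop) n (z : 'M[Z]_n)
  : Prop :=
  K n (mxscale (- 'i) z) /\ K n (mxscale 'i z).

Definition accretive_order_unit (Z : lmodType C) (K : forall n, 'M[Z]_n -> Prop)
  (e : Z) : Prop :=
  is_sa K (const_mx e : 'M[Z]_1) /\
  (forall n, (0 < n)%N -> forall z : 'M[Z]_n,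
     exists t : C, 0 < t /\ K n (mxscale t (eI n e) + z)).

Definition archimedean_unit (Z : lmodType C) (K : forall n, 'M[Z]_n -> Prop)
  (e : Z) : Prop :=
  forall n, (0 < n)%N -> forall z : 'M[Z]_n,
    (forall t : C, 0 < t -> K n (mxscale t (eI n e) + z)) -> K n z.

Definition self_adjoint (V : lmodType C) (K : forall n, 'M[V]_n -> Prop) : Prop :=
  forall v : V, exists m (c : 'I_m -> C) (w : 'I_m -> V),
    (forall i, is_sa K (const_mx (w i) : 'M[V]_1)) /\ v = \sum_(i < m) c i *: w i.

(* star is a conjugate-linear involution on V fixing V_sa^1
   (by self-adjointness it is the unique such map) *)
Definition sa_involution (V : lmodType C) (K : forall n, 'M[V]_n -> Prop)
  (star : V -> V) : Prop :=
  [/\ (forall (a : C) (v w : V), star (a *: v + w) = a^* *: star v + star w),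
      (forall v, star (star v) = v)
    & (forall v, is_sa K (const_mx v : 'M[V]_1) -> star v = v)].

Definition real_completely_positive (Z V : lmodType C)
  (KZ : forall n, 'M[Z]_n -> Prop) (KV : forall n, 'M[V]_n -> Prop)
  (psi : {linear Z -> V}) : Prop :=
  forall n, (0 < n)%N -> forall x : 'M[Z]_n, KZ n x -> KV n (map_mx psi x).

Definition real_complete_order_embedding (Z V : lmodType C)
  (KZ : forall n, 'M[Z]_n -> Prop) (KV : forall n, 'M[V]_n -> Prop)
  (psi : {linear Z -> V}) : Prop :=
  [/\ injective psi,
      real_completely_positive KZ KV psi
    & (forall n, (0 < n)%N -> forall x : 'M[Z]_n, KV n (map_mx psi x) -> KZ n x)].

Definition star_closure (Z V : lmodType C)
  (KZ : forall n, 'M[Z]_n -> Prop) (KV : forall n, 'M[V]_n -> Prop)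
  (psi : {linear Z -> V}) (star : V -> V) : Prop :=
  [/\ accretive_movs KV, self_adjoint KV, sa_involution KV star,
      real_complete_order_embedding KZ KV psi
    & (forall v : V, exists z1 z2 : Z, v = psi z1 + star (psi z2))].

End Defs.

(* Main.v *)
Require Import Defs.
From HB Require Import structures.
From mathcomp Require Import all_boot all_order all_algebra.
From mathcomp Require Import ring.
From Stdlib Require Import IndefiniteDescription.
Set Implicit Arguments. Unset Strict Implicit. Unset Printing Implicit Defensive.
Import Order.TTheory GRing.Theory Num.Theory.
Local Open Scope ring_scope.
From Stdlib Require Import IndefiniteDescription.

Notation dl C p k := (((p == k)%:R) : C).

Lemma sum_delta (C : numClosedFieldType) (V : lmodType C) n (F : 'I_n -> V) q :
  \sum_l (dl C q l) *: F l = F q.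
Proof.
rewrite (bigD1 q) //= eqxx scale1r big1 ?addr0 // => l /negbTE.
by rewrite eq_sym => ->; rewrite scale0r.
Qed.

Lemma sum2_delta (C : numClosedFieldType) (V : lmodType C) n
  (F : 'I_n -> 'I_n -> V) p q :
  \sum_k \sum_l (dl C p k * dl C q l) *: F k l = F p q.
Proof.
under eq_bigr => k _ do under eq_bigr => l _ do rewrite -scalerA.
under eq_bigr => k _ do rewrite -scaler_sumr sum_delta.
by rewrite sum_delta.
Qed.

Lemma conj1E (C : numClosedFieldType) (V : lmodType C) n (X : 'M[C]_(1, n))
  (x : 'M[V]_1) :
  mxconj_act X x = \matrix_(p, q) (((X 0 p)^* * X 0 q) *: x 0 0).
Proof. by apply/matrixP => p q; rewrite !mxE !big_ord1. Qed.

Lemma conj0 (C : numClosedFieldType) (V : lmodType C) n k (x : 'M[V]_n) :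
  mxconj_act (0 : 'M[C]_(n, k)) x = 0.
Proof.
apply/matrixP => p q; rewrite !mxE big1 // => i _; rewrite big1 // => j _.
by rewrite !mxE mulr0 scale0r.
Qed.

Lemma Ksum (C : numClosedFieldType) (V : lmodType C)
  (K : forall n, 'M[V]_n -> Prop) n (I : Type) (r : seq I) (F : I -> 'M[V]_n) :
  matrix_cone K -> (0 < n)%N -> K n 0 -> (forall i, K n (F i)) ->
  K n (\sum_(i <- r) F i).
Proof.
move=> [hadd _ _] hn h0 hF.
by apply: (big_ind (K n)) => // x y; apply: hadd.
Qed.

Section Star.
Variables (C : numClosedFieldType) (V : lmodType C) (star : V -> V).
Hypothesis hlin : forall (a : C) (v w : V), star (a *: v + w) = a^* *: star v + star w.

Lemma star0 : star 0 = 0.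
Proof.
have := hlin 1 0 0; rewrite scaler0 add0r rmorph1 scale1r => h.
by apply: (addrI (star 0)); rewrite -h addr0.
Qed.

Lemma starD v w : star (v + w) = star v + star w.
Proof. by have := hlin 1 v w; rewrite !scale1r rmorph1 scale1r. Qed.

Lemma starZ a v : star (a *: v) = a^* *: star v.
Proof. by have := hlin a v 0; rewrite !addr0 star0 addr0. Qed.

Lemma starN v : star (- v) = - star v.
Proof. by rewrite -scaleN1r starZ rmorphN1 scaleN1r. Qed.

Lemma starB v w : star (v - w) = star v - star w.
Proof. by rewrite starD starN. Qed.

Lemma star_sum I (r : seq I) (F : I -> V) :
  star (\sum_(i <- r) F i) = \sum_(i <- r) star (F i).
Proof. exact: (big_morph star starD star0). Qed.
End Star.
Lemma Nlemma (C : numClosedFieldType) (V : lmodType C)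
  (K : forall n, 'M[V]_n -> Prop) n (hn : (0 < n)%N) (w : V) (c : C) (k l : 'I_n) :
  matrix_cone K -> is_sa K (const_mx w : 'M[V]_1) ->
  K n (\matrix_(p, q) ((dl C p k * dl C q l * c - dl C p l * dl C q k * c^*) *: w)).
Proof.
move=> [hadd _ hconj] [hm hp].
set b := - 'i * c.
pose X1 : 'M[C]_(1, n) := \row_j (dl C j k + b * dl C j l).
pose X2 : 'M[C]_(1, n) := \row_j (dl C j k).
pose X3 : 'M[C]_(1, n) := \row_j (b * dl C j l).
have h1 := hconj _ _ (ltn0Sn 0) hn X1 _ hp.
have h2 := hconj _ _ (ltn0Sn 0) hn X2 _ hm.
have h3 := hconj _ _ (ltn0Sn 0) hn X3 _ hm.
have := hadd _ hn _ _ (hadd _ hn _ _ h1 h2) h3.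
rewrite !conj1E; congr (K n _); apply/matrixP => p q; rewrite !mxE.
rewrite !scalerA -!scalerDl; congr (_ *: w).
rewrite /b !rmorphD /= !rmorphM /= !rmorphN /= conjCi !conjC_nat opprK.
have hi : 'i * 'i = -1 :> C by rewrite -expr2 sqrCi.
set a := dl C p k; set a' := dl C q k; set bb := dl C p l; set bb' := dl C q l.
have -> : (a + 'i * c^* * bb) * (a' + - 'i * c * bb') * 'i + a * a' * - 'i +
  'i * c^* * bb * (- 'i * c * bb') * - 'i =
  a * bb' * c - bb * a' * c^* + ('i * 'i + 1) * (c^* * bb * a' - c * a * bb') by ring.
by rewrite hi addNr mul0r addr0.
Qed.
Lemma Mlemma (C : numClosedFieldType) (V : lmodType C)
  (K : forall n, 'M[V]_n -> Prop) (star : V -> V) n (hn : (0 < n)%N)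
  (d : V) (k l : 'I_n) :
  matrix_cone K -> self_adjoint K -> sa_involution K star -> K n 0 ->
  K n (\matrix_(p, q) ((dl C p k * dl C q l) *: d - (dl C p l * dl C q k) *: star d)).
Proof.
move=> hK hsa [hlin _ hfix] h0.
have [m [c [w [hw ->]]]] := hsa d.
have -> : \matrix_(p, q) ((dl C p k * dl C q l) *: (\sum_(i < m) c i *: w i)
     - (dl C p l * dl C q k) *: star (\sum_(i < m) c i *: w i)) =
   \sum_(i < m) \matrix_(p, q) ((dl C p k * dl C q l * c i
        - dl C p l * dl C q k * (c i)^*) *: w i).
  apply/matrixP => p q; rewrite !mxE summxE (star_sum hlin) !scaler_sumr -sumrB.
  apply: eq_bigr => i _; rewrite !mxE (starZ hlin) hfix // !scalerA -scalerBl.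
  done.
apply: Ksum => // i; exact: Nlemma.
Qed.
Lemma map_mxscale (C : numClosedFieldType) (Z V : lmodType C) (psi : {linear Z -> V})
  m n t (x : 'M[Z]_(m, n)) : map_mx psi (mxscale t x) = mxscale t (map_mx psi x).
Proof. by apply/matrixP => p q; rewrite !mxE linearZ. Qed.

Lemma map_eI (C : numClosedFieldType) (Z V : lmodType C) (psi : {linear Z -> V})
  n (e : Z) : map_mx psi (eI n e) = eI n (psi e).
Proof. by apply/matrixP => p q; rewrite !mxE; case: ifP => // _; rewrite linear0. Qed.

Lemma decompM (C : numClosedFieldType) (Z V : lmodType C)
  (KV : forall n, 'M[V]_n -> Prop) (psi : {linear Z -> V}) (star : V -> V) n
  (hn : (0 < n)%N) (v : 'M[V]_n) :
  matrix_cone KV -> self_adjoint KV -> sa_involution KV star -> KV n 0 ->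
  (forall v : V, exists z1 z2 : Z, v = psi z1 + star (psi z2)) ->
  exists (w : 'M[Z]_n) (D : 'M[V]_n), v = map_mx psi w + D /\ KV n D /\ KV n (- D).
Proof.
move=> hK hsa hinv h0 hdec.
have [hlin hstarK _] := hinv.
have hf : forall v : V, {z : Z * Z | v = psi z.1 + star (psi z.2)}.
  move=> u; apply: constructive_indefinite_description.
  by have [z1 [z2 h]] := hdec u; exists (z1, z2).
pose x : 'M[Z]_n := \matrix_(p, q) (sval (hf (v p q))).1.
pose y : 'M[Z]_n := \matrix_(p, q) (sval (hf (v p q))).2.
pose a := map_mx psi y.
pose D : 'M[V]_n := \matrix_(p, q) (star (a p q) - a q p).
exists (x + y^T), D; split; [|split].
- apply/matrixP => p q; rewrite !mxE linearD /= -addrA [_ + (_ - _)]addrC subrK.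
  exact (proj2_sig (hf (v p q))).
- have -> : D = \sum_k \sum_l \matrix_(p, q) ((dl C p k * dl C q l) *: star (a k l)
       - (dl C p l * dl C q k) *: star (star (a k l))).
    apply/matrixP => p q; rewrite summxE.
    under eq_bigr => k _ do rewrite summxE.
    under eq_bigr => k _ do under eq_bigr => l _ do rewrite mxE.
    under eq_bigr => k _ do rewrite sumrB.
    rewrite sumrB sum2_delta exchange_big /=.
    rewrite (sum2_delta (fun l k => star (star (a k l)))) hstarK.
    by rewrite mxE.
  apply: Ksum => // k; apply: Ksum => // l; exact: (Mlemma hn _ k l hK hsa hinv h0).
- have -> : - D = \sum_k \sum_l \matrix_(p, q) ((dl C p l * dl C q k) *: a k l
       - (dl C p k * dl C q l) *: star (a k l)).
    apply/matrixP => p q; rewrite summxE.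
    under eq_bigr => k _ do rewrite summxE.
    under eq_bigr => k _ do under eq_bigr => l _ do rewrite mxE.
    under eq_bigr => k _ do rewrite sumrB.
    rewrite sumrB [X in X - _]exchange_big /= sum2_delta.
    rewrite sum2_delta.
    by rewrite !mxE opprB.
  apply: Ksum => // k; apply: Ksum => // l.
  have := Mlemma hn (a k l) l k hK hsa hinv h0.
  by congr (KV n _); apply/matrixP => p q; rewrite !mxE hstarK.
Qed.

Theorem proposition3p3 (C : numClosedFieldType) (Z V : lmodType C)
  (KZ : forall n, 'M[Z]_n -> Prop) (e : Z)
  (KV : forall n, 'M[V]_n -> Prop) (psi : {linear Z -> V}) (star : V -> V) :
  accretive_movs KZ -> accretive_order_unit KZ e -> archimedean_unit KZ e ->
  star_closure KZ KV psi star ->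
  accretive_order_unit KV (psi e) /\ archimedean_unit KV (psi e).
Proof.
move=> _ [[hm hp] hunit] harch [[hK _] hsa hinv [_ hrcp hinv'] hdec].
have hm' : KV 1%N (mxscale (- 'i) (const_mx (psi e))).
  by have := hrcp _ (ltn0Sn 0) _ hm; rewrite map_mxscale map_const_mx.
have hp' : KV 1%N (mxscale 'i (const_mx (psi e))).
  by have := hrcp _ (ltn0Sn 0) _ hp; rewrite map_mxscale map_const_mx.
have h0 : forall n, (0 < n)%N -> KV n 0.
  move=> n hn; have [_ _ hc] := hK.
  by have := hc _ _ (ltn0Sn 0) hn 0 _ hp'; rewrite conj0.
have [hadd _ _] := hK.
split; first split => //.
- move=> n hn v.
  have [w [D [-> [hD _]]]] := decompM hn v hK hsa hinv (h0 n hn) hdec.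
  have [t [ht htK]] := hunit n hn w.
  exists t; split => //.
  have := hrcp _ hn _ htK; rewrite map_mxD map_mxscale map_eI => h.
  by rewrite addrA; apply: hadd.
- move=> n hn v hv.
  have [w [D [hvD [hD hND]]]] := decompM hn v hK hsa hinv (h0 n hn) hdec.
  have hw : KZ n w.
    apply: harch => // t ht; apply: hinv' => //.
    rewrite map_mxD map_mxscale map_eI.
    have -> : mxscale t (eI n (psi e)) + map_mx psi w =
      (mxscale t (eI n (psi e)) + v) + - D by rewrite hvD addrA addrK.
    by apply: hadd => //; apply: hv.
  by rewrite hvD; apply: hadd => //; apply: hrcp.
Qed.
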